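(* Let $H$ be a connected graph and let $G=KB(H)$ be its biclique graph. Let $b_1,b_2$ be false-twin vertices of $G$ (i.e. $b_1\neq b_2$ and $N_G(b_1)=N_G(b_2)$), and let $B_1,B_2$ be the bicliques of $H$ corresponding to $b_1,b_2$. Suppose that there is no edge of $H$ between a vertex of $B_1$ and a vertex of $B_2$. Then there exists a vertex $v\in V(H)$ that is adjacent to every vertex of $B_1$ and to every vertex of $B_2$. Furthermore, $G$ contains $K_5$ as an induced subgraph.
   Context: All graphs are finite, simple, undirected and connected. A biclique of a graph $H$ is a maximal (under inclusion of vertex sets) induced complete bipartite subgraph of $H$ with both sides nonempty. The biclique graph $KB(H)$ is the intersection graph of the bicliques of $H$: its vertices are the bicliques of $H$, and two distinct bicliques are adjacent iff they share at least one vertex. $N(u)$ denotes the open neighborhood of $u$; two vertices $u,w$ are false twins if $N(u)=N(w)$. *)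

(* Defs.v *)
From mathcomp Require Import all_boot.
Set Implicit Arguments. Unset Strict Implicit. Unset Printing Implicit Defensive.

Definition simple_graph (T : finType) (e : rel T) : Prop :=
  symmetric e /\ irreflexive e.

Definition connected_graph (T : finType) (e : rel T) : Prop :=
  forall x y : T, connect e x y.

Definition induces_complete_bipartite (T : finType) (e : rel T) (S : {set T}) : Prop :=
  exists X Y : {set T},
    [/\ S = X :|: Y, [disjoint X & Y], X != set0, Y != set0 &
     [/\ {in X &, forall x x', ~~ e x x'},
         {in Y &, forall y y', ~~ e y y'} &
         {in X & Y, forall x y, e x y}]].

(* A biclique (identified with its vertex set, since it is induced):
   maximal under inclusion of vertex sets. *)
Definition biclique (T : finType) (e : rel T) (S : {set T}) : Prop :=
  induces_complete_bipartite e S /\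
  forall S' : {set T}, S \subset S' -> induces_complete_bipartite e S' -> S' = S.

Definition KB_adj (T : finType) (B1 B2 : {set T}) : Prop :=
  B1 <> B2 /\ B1 :&: B2 != set0.

Definition KB_false_twins (T : finType) (e : rel T) (B1 B2 : {set T}) : Prop :=
  B1 <> B2 /\
  forall B : {set T}, biclique e B -> (KB_adj B B1 <-> KB_adj B B2).

Definition KB_has_induced_K5 (T : finType) (e : rel T) : Prop :=
  exists f : 'I_5 -> {set T},
    (forall i, biclique e (f i)) /\
    (forall i j, i != j -> KB_adj (f i) (f j)).

(* Main.v *)
Require Import Defs.
From mathcomp Require Import all_boot.
From mathcomp Require Import zify.
From Stdlib Require Import Classical.

Set Implicit Arguments. Unset Strict Implicit. Unset Printing Implicit Defensive.

Lemma cb_side (T : finType) (e : rel T) (S : {set T}) :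
  symmetric e -> induces_complete_bipartite e S ->
  exists s : T -> bool, {in S &, forall a b, e a b = (s a != s b)}.
Proof.
move=> sym [X [Y [-> dis _ _ [iX iY cXY]]]].
exists (fun x => x \in X) => a b.
rewrite !inE => /orP[aX|aY] /orP[bX|bY].
- by rewrite (negbTE (iX _ _ aX bX)) aX bX.
- by rewrite (cXY _ _ aX bY) aX (disjointFl dis bY).
- by rewrite sym (cXY _ _ bX aY) bX (disjointFl dis aY).
- by rewrite (negbTE (iY _ _ aY bY)) (disjointFl dis aY) (disjointFl dis bY).
Qed.

Lemma cb_partner (T : finType) (e : rel T) (S : {set T}) :
  symmetric e -> induces_complete_bipartite e S ->
  forall a, a \in S -> exists2 b, b \in S & e a b.
Proof.
move=> sym [X [Y [-> dis /set0Pn [x xX] /set0Pn [y yY] [iX iY cXY]]]] a.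
rewrite inE => /orP[aX|aY].
- by exists y; rewrite ?inE ?yY ?orbT // cXY.
- by exists x; rewrite ?inE ?xX // sym cXY.
Qed.

Lemma cb_nonempty (T : finType) (e : rel T) (S : {set T}) :
  induces_complete_bipartite e S -> exists a, a \in S.
Proof.
move=> [X [Y [-> dis /set0Pn [x xX] _ _]]].
by exists x; rewrite inE xX.
Qed.

Lemma extend_biclique (T : finType) (e : rel T) (S : {set T}) :
  induces_complete_bipartite e S -> exists2 C, biclique e C & S \subset C.
Proof.
move: {2}#|~: S| (leqnn #|~: S|) => n.
elim: n S => [|n IH] S Hn HS.
- exists S => //; split => // S' sub _.
  have h0 : ~: S == set0 by rewrite -cards_eq0; lia.
  move: h0 => /eqP/(congr1 (@setC T)); rewrite setCK setC0 => eS.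
  by apply/eqP; rewrite eqEsubset sub eS subsetT.
- case: (classic (forall S' : {set T}, S \subset S' -> induces_complete_bipartite e S' -> S' = S)) => H.
    by exists S => //; split.
  move: H => /not_all_ex_not [S' /not_all_ex_not [sub /not_all_ex_not [cb ne]]].
  have pr : S \proper S' by rewrite properEneq sub andbT; apply/eqP => E; apply: ne.
  have lt := proper_card pr.
  have : #|~: S'| <= n.
    move: (cardsC S) (cardsC S') => h1 h2; lia.
  move=> hn; have [C bC sC] := IH S' hn cb.
  by exists C => //; apply: subset_trans sC.
Qed.

Lemma exit_edge (T : finType) (e : rel T) (A : {set T}) x y :
  connect e x y -> x \in A -> y \notin A -> exists a b, [/\ a \in A, b \notin A & e a b].
Proof.
move=> /connectP [p].
elim: p x => [|c p IH] x /=; first by move=> _ -> ->.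
move=> /andP [exc pp] ey xA yA.
case cA: (c \in A).
- exact: IH c pp ey cA yA.
- by exists x, c; rewrite cA.
Qed.

Lemma star_cb (T : finType) (e : rel T) v p q :
  simple_graph e -> e v p -> e v q -> ~~ e p q ->
  induces_complete_bipartite e ([set v] :|: [set p; q]).
Proof.
move=> [sym irr] evp evq npq.
exists [set v], [set p; q]; split => //.
- rewrite disjoints1 !inE; apply/negP => /orP[] /eqP E.
    by move: evp; rewrite -E irr.
  by move: evq; rewrite -E irr.
- by apply/set0Pn; exists v; rewrite inE.
- by apply/set0Pn; exists p; rewrite !inE eqxx.
- split.
  + by move=> a b; rewrite !inE => /eqP -> /eqP ->; rewrite irr.
  + move=> a b; rewrite !inE => /orP[] /eqP -> /orP[] /eqP ->; rewrite ?irr //.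
    by rewrite sym.
  + by move=> a b; rewrite !inE => /eqP -> /orP[] /eqP ->.
Qed.

Lemma star (T : finType) (e : rel T) v p q :
  simple_graph e -> e v p -> e v q -> ~~ e p q ->
  exists2 C, biclique e C & [/\ v \in C, p \in C & q \in C].
Proof.
move=> sg evp evq npq.
have [C bC sC] := extend_biclique (star_cb sg evp evq npq).
exists C => //; split; apply: (subsetP sC); rewrite !inE eqxx ?orbT //.
Qed.

Lemma notri (T : finType) (e : rel T) (C : {set T}) a b c :
  symmetric e -> biclique e C -> a \in C -> b \in C -> c \in C ->
  e a b -> e b c -> e a c -> False.
Proof.
move=> sym [cb _] aC bC cC.
have [s hs] := cb_side sym cb.
rewrite (hs _ _ aC bC) (hs _ _ bC cC) (hs _ _ aC cC).
by case: (s a); case: (s b); case: (s c).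
Qed.


Lemma core (T : finType) (e : rel T) (P Q : {set T}) :
  symmetric e ->
  (forall C, biclique e C -> C <> P -> C <> Q -> C :&: P != set0 -> C :&: Q != set0) ->
  (forall a b, a \in P -> b \in Q -> ~~ e a b) ->
  (forall a, a \in P -> a \notin Q) ->
  forall C, biclique e C -> C <> P -> forall x u, x \in C -> u \in C -> x \in P -> u \in P ->
  e x u -> False.
Proof.
move=> sym tw ne dj C bC CP x u xC uC xP uP exu.
have CQ : C <> Q by move=> E; move: (dj _ xP); rewrite -E xC.
have : C :&: P != set0 by apply/set0Pn; exists x; rewrite inE xC.
move=> /(tw _ bC CP CQ) /set0Pn [z]; rewrite inE => /andP [zC zQ].
have [s hs] := cb_side sym bC.1.
move: exu (ne _ _ xP zQ) (ne _ _ uP zQ).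
rewrite (hs _ _ xC uC) (hs _ _ xC zC) (hs _ _ uC zC).
by case: (s x); case: (s u); case: (s z).
Qed.

Lemma lp (T : finType) (e : rel T) (P Q : {set T}) :
  simple_graph e ->
  (forall C, biclique e C -> C <> P -> C <> Q -> C :&: P != set0 -> C :&: Q != set0) ->
  (forall a b, a \in P -> b \in Q -> ~~ e a b) ->
  (forall a, a \in P -> a \notin Q) ->
  forall w x u, w \notin P -> x \in P -> u \in P -> e w x -> e x u -> e w u.
Proof.
move=> sg tw ne dj w x u wP xP uP ewx exu.
case ewu: (e w u) => //; exfalso.
have [sym irr] := sg.
have [C bC [xC wC uC]] : exists2 C, biclique e C & [/\ x \in C, w \in C & u \in C].
  by apply: star => //; [rewrite sym | rewrite ewu].
apply: (core sym tw ne dj bC _ xC uC xP uP exu).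
by move=> E; move: wP; rewrite -E wC.
Qed.

Lemma all_adj (T : finType) (e : rel T) (P Q : {set T}) :
  simple_graph e -> induces_complete_bipartite e P ->
  (forall C, biclique e C -> C <> P -> C <> Q -> C :&: P != set0 -> C :&: Q != set0) ->
  (forall a b, a \in P -> b \in Q -> ~~ e a b) ->
  (forall a, a \in P -> a \notin Q) ->
  forall w x, w \notin P -> x \in P -> e w x -> forall t, t \in P -> e w t.
Proof.
move=> sg cb tw ne dj w x wP xP ewx t tP.
have [sym irr] := sg.
have [b bP exb] := cb_partner sym cb xP.
have ewb := lp sg tw ne dj wP xP bP ewx exb.
case ext: (e x t).
  exact: (lp sg tw ne dj wP xP tP ewx ext).
have [s hs] := cb_side sym cb.
have ebt : e b t.
  move: exb ext; rewrite (hs _ _ xP bP) (hs _ _ xP tP) (hs _ _ bP tP).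
  by case: (s x); case: (s b); case: (s t).
exact: (lp sg tw ne dj wP bP tP ewb ebt).
Qed.

Lemma mkadj (T : finType) (A B : {set T}) x y :
  x \in A -> x \in B -> y \in A -> y \notin B -> KB_adj A B.
Proof.
move=> xA xB yA yB; split.
  by move=> E; move: yB; rewrite -E yA.
by apply/set0Pn; exists x; rewrite inE xA.
Qed.

Lemma KB_adj_sym (T : finType) (A B : {set T}) : KB_adj A B -> KB_adj B A.
Proof. by move=> [ne I]; split; [move=> E; apply: ne | rewrite setIC]. Qed.

Theorem lemma1 (T : finType) (e : rel T) :
  simple_graph e -> connected_graph e ->
  forall B1 B2 : {set T},
    biclique e B1 -> biclique e B2 ->
    KB_false_twins e B1 B2 ->
    (forall x y, x \in B1 -> y \in B2 -> ~~ e x y) ->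
    (exists v : T, (forall x, x \in B1 -> e v x) /\ (forall y, y \in B2 -> e v y))
    /\ KB_has_induced_K5 e.
Proof.
move=> sg conn B1 B2 b1 b2 [neq tw] ne1.
have [sym irr] := sg.
have tw1 : forall C, biclique e C -> C <> B1 -> C <> B2 -> C :&: B1 != set0 -> C :&: B2 != set0.
  move=> C bC h1 h2 h; have [_ ] := (tw C bC).1 (conj h1 h) => //.
have tw2 : forall C, biclique e C -> C <> B2 -> C <> B1 -> C :&: B2 != set0 -> C :&: B1 != set0.
  move=> C bC h1 h2 h; have [_ ] := (tw C bC).2 (conj h1 h) => //.
have dj1 : forall a, a \in B1 -> a \notin B2.
  move=> a aB1; apply/negP => aB2.
  have : KB_adj B2 B1.
    split; first by move=> E; apply: neq.
    by apply/set0Pn; exists a; rewrite inE aB1 aB2.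
  by move/(tw B2 b2) => [].
have dj2 : forall a, a \in B2 -> a \notin B1.
  by move=> a aB2; apply/negP => aB1; move: (dj1 _ aB1); rewrite aB2.
have ne2 : forall a b, a \in B2 -> b \in B1 -> ~~ e a b.
  by move=> a b aB2 bB1; rewrite sym ne1.
have [x0 x0B1] := cb_nonempty b1.1.
have [y0 y0B2] := cb_nonempty b2.1.
have [a [w [aB1 wB1 eaw]]] := exit_edge (conn x0 y0) x0B1 (dj2 _ y0B2).
have [C bC [aC wC _]] : exists2 C, biclique e C & [/\ a \in C, w \in C & w \in C].
  by apply: star => //; rewrite irr.
have CB1 : C <> B1 by move=> E; move: wB1; rewrite -E wC.
have CB2 : C <> B2 by move=> E; move: (dj1 _ aB1); rewrite -E aC.
have : C :&: B1 != set0 by apply/set0Pn; exists a; rewrite inE aC.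
move=> /(tw1 _ bC CB1 CB2) /set0Pn [z]; rewrite inE => /andP [zC zB2].
have ewz : e w z.
  have [s hs] := cb_side sym bC.1.
  move: eaw (ne1 _ _ aB1 zB2); rewrite (hs _ _ aC wC) (hs _ _ aC zC) (hs _ _ wC zC).
  by case: (s a); case: (s w); case: (s z).
have wB2 : w \notin B2.
  by apply/negP => wB2; move: (ne1 _ _ aB1 wB2); rewrite eaw.
have adj1 := all_adj sg b1.1 tw1 ne1 dj1 wB1 aB1 (etrans (sym w a) eaw).
have adj2 := all_adj sg b2.1 tw2 ne2 dj2 wB2 zB2 ewz.
split; first by exists w.
have [a' a'B1 eaa'] := cb_partner sym b1.1 aB1.
have [z' z'B2 ezz'] := cb_partner sym b2.1 zB2.
have mk : forall p q, p \in B1 -> q \in B2 ->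
    exists2 C, biclique e C & [/\ w \in C, p \in C & q \in C].
  by move=> p q pB qB; apply: star => //; [apply: adj1 | apply: adj2 | apply: ne1].
have [C1 bC1 [wC1 aC1 zC1]] := mk a z aB1 zB2.
have [C2 bC2 [wC2 aC2 z'C2]] := mk a z' aB1 z'B2.
have [C3 bC3 [wC3 a'C3 zC3]] := mk a' z a'B1 zB2.
have [C4 bC4 [wC4 a'C4 z'C4]] := mk a' z' a'B1 z'B2.
have ewa := adj1 _ aB1. have ewa' := adj1 _ a'B1.
have ewz' := adj2 _ z'B2.
have naC3 : a \notin C3.
  by apply/negP => h; apply: (notri sym bC3 wC3 h a'C3 ewa eaa' ewa').
have naC4 : a \notin C4.
  by apply/negP => h; apply: (notri sym bC4 wC4 h a'C4 ewa eaa' ewa').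
have nzC2 : z \notin C2.
  by apply/negP => h; apply: (notri sym bC2 wC2 h z'C2 ewz ezz' ewz').
have nzC4 : z \notin C4.
  by apply/negP => h; apply: (notri sym bC4 wC4 h z'C4 ewz ezz' ewz').
have h01 : KB_adj C1 B1 := mkadj aC1 aB1 wC1 wB1.
have h02 : KB_adj C2 B1 := mkadj aC2 aB1 wC2 wB1.
have h03 : KB_adj C3 B1 := mkadj a'C3 a'B1 wC3 wB1.
have h04 : KB_adj C4 B1 := mkadj a'C4 a'B1 wC4 wB1.
have h12 : KB_adj C1 C2 := mkadj wC1 wC2 zC1 nzC2.
have h13 : KB_adj C1 C3 := mkadj wC1 wC3 aC1 naC3.
have h14 : KB_adj C1 C4 := mkadj wC1 wC4 aC1 naC4.
have h23 : KB_adj C2 C3 := mkadj wC2 wC3 aC2 naC3.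
have h24 : KB_adj C2 C4 := mkadj wC2 wC4 aC2 naC4.
have h34 : KB_adj C3 C4 := mkadj wC3 wC4 zC3 nzC4.
pose f (i : 'I_5) := match val i with 0 => B1 | 1 => C1 | 2 => C2 | 3 => C3 | _ => C4 end.
exists f; split.
  by move=> [[|[|[|[|[|i]]]]] Hi]; rewrite /f /=.
move=> [i Hi] [j Hj] nij.
have : i != j by apply: contra nij => /eqP E; apply/eqP; apply: val_inj.
rewrite /f /=.
clear nij; move: Hi Hj.
case: i => [|[|[|[|[|i]]]]]; case: j => [|[|[|[|[|j]]]]] //= _ _ _.
all: try done.
all: by apply: KB_adj_sym.
Qed.
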